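(* Let $w\in W^*(d,2m;\vec 0)$. Then $\Phi(\phi(w))$ and $w$ have the same sequence of positive steps if and only if $\Phi(\phi(w))=w$.
   Context: $n,r,d\ge1$, $m=rn$. $U=\{u_1\prec\cdots\prec u_n\}$, $V=\{v_1\prec\cdots\prec v_n\}$; $\overline U=U\times[r]$, $\overline V=V\times[r]$ ordered lexicographically (write $u^s$ for $(u,s)$). An $r$-configuration is a bijection between $\overline U$ and $\overline V$; a quasi configuration is a partial matching. Pairs $(\bar u,\bar v),(\bar u',\bar v')$ are noncrossing if ($\bar u\prec\bar u'$ and $\bar v\prec\bar v'$) or ($\bar u'\prec\bar u$ and $\bar v'\prec\bar v$). $W^*(d,2m;\vec0)$: walks $w=a_{u_1^1}\cdots a_{u_n^r}|b_{v_1^1}\cdots b_{v_n^r}$, $a_{\bar u},b_{\bar v}\in[d]$, in $\mathbb Z^d$ from the origin with steps $e_{a_{\bar u}}$ ($\bar u$ increasing) then $-e_{b_{\bar v}}$ ($\bar v$ increasing), ending at the origin; the positive steps are $a_{u_1^1}\cdots a_{u_n^r}$. For an $r$-configuration $F$: $a_{\bar u}$ is the maximum size of a set of pairwise noncrossing pairs of $F$ containing the pair $(\bar u,\bar v')\in F$, all of whose pairs $(x,y)$ satisfy $x\preceq\bar u$, $y\preceq\bar v'$; $b_{\bar v}$ symmetrically; $\Phi(F)=a_{u_1^1}\cdots a_{u_n^r}|b_{v_1^1}\cdots b_{v_n^r}$. $A_k(w)=\{\bar u:a_{\bar u}=k\}$, $B_k(w)=\{\bar v:b_{\bar v}=k\}$;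 connecting equal-size ordered sets $A,B$ in a crossing way: pair the $i$-th smallest of $A$ with the $i$-th largest of $B$; $\phi(w)$: for each $k$, if $|A_k(w)|\ge|B_k(w)|$ connect the $|B_k(w)|$ smallest elements of $A_k(w)$ with $B_k(w)$ in a crossing way, else connect $A_k(w)$ with the $|A_k(w)|$ largest elements of $B_k(w)$ in a crossing way. (For $w$ ending at the origin, $\phi(w)$ is an $r$-configuration, so $\Phi(\phi(w))$ is defined.) *)

(* Defs.v *)
From mathcomp Require Import all_boot all_order all_algebra.
Set Implicit Arguments. Unset Strict Implicit. Unset Printing Implicit Defensive.

(* Ubar = U x [r] and Vbar = V x [r], with u_i ~ i : 'I_n,
   s ~ s : 'I_r, both ordered lexicographically. *)
Definition bar (n r : nat) := ('I_n * 'I_r)%type.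

Definition lex_lt n r (x y : bar n r) : bool :=
  (x.1 < y.1)%N || ((x.1 == y.1) && (x.2 < y.2)%N).
Definition lex_le n r (x y : bar n r) : bool := (x == y) || lex_lt x y.

(* A walk w = a | b : letters are positive integers (the [d] condition is
   part of membership in W-star). *)
Definition walk n r := ({ffun bar n r -> nat} * {ffun bar n r -> nat})%type.

(* k-th coordinate (k in [d], 1-based) of the endpoint of the walk started at
   the origin: #(steps +e_k) - #(steps -e_k). *)
Definition endpoint_coord n r (w : walk n r) (k : nat) : int :=
  (#|[set u | w.1 u == k]|%:Z - #|[set v | w.2 v == k]|%:Z)%R.

(* W-star(d, 2m; 0) with m = r n *)
Definition inWstar (d n r : nat) (w : walk n r) : Prop :=
  (forall u, 1 <= w.1 u <= d) /\ (forall v, 1 <= w.2 v <= d) /\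
  (forall k, 1 <= k <= d -> endpoint_coord w k = 0%R).

Definition matching n r := {set (bar n r * bar n r)}.

Definition noncrossing n r (p q : bar n r * bar n r) : bool :=
  (lex_lt p.1 q.1 && lex_lt p.2 q.2) || (lex_lt q.1 p.1 && lex_lt q.2 p.2).

Definition pw_noncrossing n r (S : matching n r) : bool :=
  [forall p in S, forall q in S, (p != q) ==> noncrossing p q].

Definition chainlen n r (F : matching n r) (p : bar n r * bar n r) : nat :=
  \max_(S : matching n r | [&& S \subset F, p \in S, pw_noncrossing S &
        [forall q in S, lex_le q.1 p.1 && lex_le q.2 p.2]]) #|S|.

(* Phi(F): a_u uses the pair (u, v') of F, b_v the pair (u', v) of F
   (unique when F is an r-configuration). *)
Definition Phi n r (F : matching n r) : walk n r :=
  ([ffun u => \max_(v | (u, v) \in F) chainlen F (u, v)],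
   [ffun v => \max_(u | (u, v) \in F) chainlen F (u, v)]).

Definition rank_low n r (A : {set bar n r}) x := #|[set y in A | lex_lt y x]|.
Definition rank_high n r (A : {set bar n r}) x := #|[set y in A | lex_lt x y]|.

Definition smallest n r (c : nat) (A : {set bar n r}) :=
  [set x in A | rank_low A x < c].
Definition largest n r (c : nat) (B : {set bar n r}) :=
  [set y in B | rank_high B y < c].

Definition connect_crossing n r (A B : {set bar n r}) : matching n r :=
  [set p | [&& p.1 \in A, p.2 \in B & rank_low A p.1 == rank_high B p.2]].

Definition Aset n r (w : walk n r) k := [set u | w.1 u == k].
Definition Bset n r (w : walk n r) k := [set v | w.2 v == k].

Definition phi_k n r (w : walk n r) (k : nat) : matching n r :=
  let A := Aset w k in let B := Bset w k in
  if #|B| <= #|A| then connect_crossing (smallest #|B| A) B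
  else connect_crossing A (largest #|A| B).

Definition phi (d n r : nat) (w : walk n r) : matching n r :=
  \bigcup_(k < d) phi_k w k.+1.

(* Main.v *)
Require Import Defs.
From mathcomp Require Import all_boot all_order all_algebra.
From mathcomp Require Import zify.
Import GRing.Theory.

Section Aux.
Variables n r : nat.
Implicit Types x y z : bar n r.
Implicit Types S A B : {set bar n r}.
Implicit Types u v : bar n r.

Lemma lexE x y : lex_lt x y = ((x.1 : nat) < y.1)%N || (((x.1 : nat) == y.1) && (x.2 < y.2)%N).
Proof. by []. Qed.

Lemma lex_irr x : ~~ lex_lt x x.
Proof. rewrite lexE; lia. Qed.

Lemma lex_trans x y z : lex_lt x y -> lex_lt y z -> lex_lt x z.
Proof. rewrite !lexE; lia. Qed.

Lemma lex_total x y : x != y -> lex_lt x y || lex_lt y x.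
Proof.
case: x => a b; case: y => c e /=; rewrite !lexE /= xpair_eqE -!val_eqE /=.
lia.
Qed.

Lemma rank_low_mono S x y : x \in S -> lex_lt x y -> rank_low S x < rank_low S y.
Proof.
move=> xS xy; apply: proper_card; apply/properP; split.
  apply/subsetP => z; rewrite !inE => /andP[-> zx]; exact: lex_trans zx xy.
by exists x; rewrite !inE ?xS ?xy ?(negbTE (lex_irr x)) ?andbF.
Qed.

Lemma rank_high_mono S x y : y \in S -> lex_lt x y -> rank_high S y < rank_high S x.
Proof.
move=> yS xy; apply: proper_card; apply/properP; split.
  apply/subsetP => z; rewrite !inE => /andP[-> zx]; exact: lex_trans xy zx.
by exists y; rewrite !inE ?yS ?xy ?(negbTE (lex_irr y)) ?andbF.
Qed.

Lemma rank_low_inj S x y : x \in S -> y \in S -> rank_low S x = rank_low S y -> x = y.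
Proof.
move=> xS yS e; apply/eqP; apply/negPn/negP => /lex_total /orP[h|h].
  by have := @rank_low_mono S x y xS h; rewrite e ltnn.
by have := @rank_low_mono S y x yS h; rewrite e ltnn.
Qed.

Lemma rank_high_inj S x y : x \in S -> y \in S -> rank_high S x = rank_high S y -> x = y.
Proof.
move=> xS yS e; apply/eqP; apply/negPn/negP => /lex_total /orP[h|h].
  by have := @rank_high_mono S x y yS h; rewrite e ltnn.
by have := @rank_high_mono S y x xS h; rewrite e ltnn.
Qed.

Lemma rank_low_lt S x : x \in S -> rank_low S x < #|S|.
Proof.
move=> xS; apply: proper_card; apply/properP; split.
  by apply/subsetP => z; rewrite !inE => /andP[].
by exists x; rewrite // !inE (negbTE (lex_irr x)) andbF.
Qed.

Lemma rank_high_lt S x : x \in S -> rank_high S x < #|S|.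
Proof.
move=> xS; apply: proper_card; apply/properP; split.
  by apply/subsetP => z; rewrite !inE => /andP[].
by exists x; rewrite // !inE (negbTE (lex_irr x)) andbF.
Qed.

Lemma rank_low_onto S j : j < #|S| -> exists2 x, x \in S & rank_low S x = j.
Proof.
move=> hj.
set s := map (rank_low S) (enum S).
have us : uniq s.
  rewrite map_inj_in_uniq ?enum_uniq // => x y; rewrite !mem_enum.
  exact: rank_low_inj.
have sub : {subset s <= iota 0 #|S|}.
  move=> i /mapP [x]; rewrite mem_enum => xS ->; rewrite mem_iota /=.
  exact: rank_low_lt.
have hsz : size (iota 0 #|S|) <= size s by rewrite size_iota size_map -cardE.
have [_ E] := uniq_min_size us sub hsz.
have : j \in s by rewrite E mem_iota.
by case/mapP => x; rewrite mem_enum => xS ->; exists x.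
Qed.

Lemma smallest_all S : smallest #|S| S = S.
Proof.
apply/setP => x; rewrite inE; case xS: (x \in S) => //=; exact: rank_low_lt.
Qed.

Lemma cc_uniq1 A B u v (v' : bar n r) : (u, v) \in connect_crossing A B ->
  (u, v') \in connect_crossing A B -> v = v'.
Proof.
rewrite !inE /= => /and3P[_ vB /eqP e1] /and3P[_ vB' /eqP e2].
by apply: (@rank_high_inj B v v' vB vB'); rewrite -e1 -e2.
Qed.

Lemma cc_uniq2 A B u (u' : bar n r) v : (u, v) \in connect_crossing A B ->
  (u', v) \in connect_crossing A B -> u = u'.
Proof.
rewrite !inE /= => /and3P[uA _ /eqP e1] /and3P[uA' _ /eqP e2].
by apply: (@rank_low_inj A u u' uA uA'); rewrite e1 e2.
Qed.

Variable w : walk n r.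

Lemma phik_lab k p : p \in phi_k w k -> w.1 p.1 = k /\ w.2 p.2 = k.
Proof.
rewrite /phi_k; case: ifP => _; rewrite inE => /and3P[h1 h2 _];
  move: h1 h2; rewrite !inE.
  by move=> /andP[/eqP -> _] /eqP ->.
by move=> /eqP -> /andP[/eqP -> _].
Qed.

Lemma phik_uniq1 k u v (v' : bar n r) : (u, v) \in phi_k w k -> (u, v') \in phi_k w k -> v = v'.
Proof. rewrite /phi_k; case: ifP => _; exact: cc_uniq1. Qed.

Lemma phik_uniq2 k u (u' : bar n r) v : (u, v) \in phi_k w k -> (u', v) \in phi_k w k -> u = u'.
Proof. rewrite /phi_k; case: ifP => _; exact: cc_uniq2. Qed.

Lemma phi_lab d p : p \in phi d w -> w.1 p.1 = w.2 p.2.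
Proof. by case/bigcupP => k _ /phik_lab [-> ->]. Qed.

Lemma phi_uniq1 d u v (v' : bar n r) : (u, v) \in phi d w -> (u, v') \in phi d w -> v = v'.
Proof.
case/bigcupP => k _ h1 /bigcupP [k' _ h2].
have [e1 _] := phik_lab _ _ h1; have [e2 _] := phik_lab _ _ h2.
move: h2; rewrite -[k'.+1]e2 /= e1 => h2; exact: (@phik_uniq1 _ u v v' h1 h2).
Qed.

Lemma phi_uniq2 d u (u' : bar n r) v : (u, v) \in phi d w -> (u', v) \in phi d w -> u = u'.
Proof.
case/bigcupP => k _ h1 /bigcupP [k' _ h2].
have [_ e1] := phik_lab _ _ h1; have [_ e2] := phik_lab _ _ h2.
move: h2; rewrite -[k'.+1]e2 /= e1 => h2; exact: (@phik_uniq2 _ u u' v h1 h2).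
Qed.

End Aux.

Theorem lemma7 (n r d : nat) (hn : 0 < n) (hr : 0 < r) (hd : 0 < d)
  (w : walk n r) :
  inWstar d w ->
  ((Phi (phi d w)).1 = w.1 <-> Phi (phi d w) = w).
Proof.
move=> [ha [hb he]]; split; last by move=> ->.
move=> H1.
have ex : forall v, exists u, (u, v) \in phi d w.
  move=> v; set k := w.2 v.
  have /andP[k1 kd] := hb v.
  have hk : k.-1 < d by rewrite /k; lia.
  have ecard : #|Aset w k| = #|Bset w k|.
    have := he k (hb v); rewrite /endpoint_coord => /eqP.
    rewrite subr_eq0 => /eqP [] //.
  have vB : v \in Bset w k by rewrite inE.
  have hlt : rank_high (Bset w k) v < #|Aset w k|.
    by rewrite ecard; exact: rank_high_lt.
  have [u uA eu] := @rank_low_onto n r _ _ hlt.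
  exists u; apply/bigcupP; exists (Ordinal hk) => //=.
  rewrite prednK; last by rewrite /k; lia.
  rewrite /phi_k -ecard leqnn smallest_all inE /= uA vB /= eu //.
have part1 : forall u v, (u, v) \in phi d w ->
    (Phi (phi d w)).1 u = chainlen (phi d w) (u, v).
  move=> u v h; rewrite ffunE (eq_bigl (fun v' => v' == v)) ?big_pred1_eq //.
  move=> v' /=; apply/idP/eqP => [h'|->] //.
  exact: (@phi_uniq1 n r w d u v' v h' h).
have H2 : (Phi (phi d w)).2 = w.2.
  apply/ffunP => v; have [u h] := ex v.
  rewrite ffunE (eq_bigl (fun u' => u' == u)) ?big_pred1_eq //.
    by rewrite -part1 // H1 (@phi_lab n r w d _ h).
  move=> u' /=; apply/idP/eqP => [h'|->] //.
  exact: (@phi_uniq2 n r w d u' u v h' h).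
move: (Phi (phi d w)) H1 H2 => [x y] /= -> ->; by case: w ha hb he ex part1.
Qed.
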